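(* Let $A,B$ be finite groups equipped with probability measures $\mu$ on $A$ and $\nu$ on $B$. Let $(\mathcal{M},\tau)$ be a von Neumann algebra with a normal faithful tracial state and $U:A\to\mathcal{U}(\mathcal{M})$, $V:B\to\mathcal{U}(\mathcal{M})$ group homomorphisms. Then \[\mathbf{E}_{a\in A,b\in B}\|[U(a),V(b)]\|_2^2\leq\kappa(\mu)\kappa(\nu)\int\|[U(a),V(b)]\|_2^2\,d\mu(a)\,d\nu(b).\]
   Context: $\|x\|_2=\tau(x^*x)^{1/2}$, $[x,y]=xy-yx$, $\mathbf{E}$ is the average for the uniform probability measure. For a countable group $G$ and a probability measure $\mu$ on $G$, $\kappa(\mu)$ is the smallest number $\kappa\in[0,+\infty]$ such that for every unitary representation $(\pi,\mathcal{H})$ of $G$ and every $\xi\in\mathcal{H}$, $\|\xi-P_{\mathcal{H}^\pi}\xi\|^2\leq\frac{\kappa}{2}\int_G\|\pi(g)\xi-\xi\|^2d\mu(g)$, where $\mathcal{H}^\pi$ is the space of $\pi(G)$-invariant vectors and $P_{\mathcal{H}^\pi}$ the orthogonal projection onto it ($\kappa(\mu)=+\infty$ if no finite constant works, e.g. if the support of $\mu$ does not generate $G$; in that case the right-hand side of the claim is interpreted as $+\infty$). *)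

(* Defs.v *)
From HB Require Import structures.
From mathcomp Require Import all_boot all_order all_algebra all_fingroup.
From mathcomp Require Import complex.
From mathcomp Require Import boolp classical_sets reals constructive_ereal ereal.

Set Implicit Arguments.
Unset Strict Implicit.
Unset Printing Implicit Defensive.

Import Order.TTheory GRing.Theory Num.Theory.
Local Open Scope ring_scope.

Record hilbert (R : realType) (H : lmodType R[i]) := Hilbert {
  ip : H -> H -> R[i];
  ip_linear : forall (a : R[i]) (x y z : H), ip (a *: x + y) z = a * ip x z + ip y z;
  ip_conj : forall x y : H, ip y x = (ip x y)^*;
  ip_ge0 : forall x : H, 0 <= ip x x;
  ip_eq0 : forall x : H, ip x x = 0 -> x = 0;
  ip_complete : forall u : nat -> H,
    (forall e : R, 0 < e -> exists N : nat, forall m n : nat, (N <= m)%N -> (N <= n)%N ->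
        Num.sqrt (complex.Re (ip (u m - u n) (u m - u n))) < e) ->
    exists l : H, forall e : R, 0 < e -> exists N : nat, forall n : nat, (N <= n)%N ->
        Num.sqrt (complex.Re (ip (u n - l) (u n - l))) < e
}.

Definition hnorm (R : realType) (H : lmodType R[i]) (h : hilbert H) (x : H) : R :=
  Num.sqrt (complex.Re (ip h x x)).

Definition unitary_rep (R : realType) (G : finGroupType) (H : lmodType R[i])
    (h : hilbert H) (pi : G -> H -> H) : Prop :=
  [/\ (forall g (a : R[i]) (x y : H), pi g (a *: x + y) = a *: pi g x + pi g y),
      (forall g (x y : H), ip h (pi g x) (pi g y) = ip h x y),
      (forall g, forall y : H, exists x : H, pi g x = y),
      (forall x : H, pi 1%g x = x) &
      (forall g1 g2 (x : H), pi (g1 * g2)%g x = pi g1 (pi g2 x))].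

Definition prob_measure (R : realType) (G : finGroupType) (mu : G -> R) : Prop :=
  (forall g, 0 <= mu g) /\ \sum_(g : G) mu g = 1.

(* k is an admissible constant in the definition of kappa(mu):
   for every unitary representation (pi, H) and xi in H,
   ||xi - P xi||^2 <= k/2 * int ||pi(g) xi - xi||^2 dmu(g),
   where P xi is the orthogonal projection of xi onto the invariant vectors,
   i.e. the (unique) invariant eta with xi - eta orthogonal to all invariant vectors. *)
Definition kappa_admissible (R : realType) (G : finGroupType) (mu : G -> R) (k : R) : Prop :=
  forall (H : lmodType R[i]) (h : hilbert H) (pi : G -> H -> H),
    unitary_rep h pi ->
    forall xi eta : H,
      (forall g, pi g eta = eta) ->
      (forall zeta : H, (forall g, pi g zeta = zeta) -> ip h (xi - eta) zeta = 0) ->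
      hnorm h (xi - eta) ^+ 2
        <= k / 2 * \sum_(g : G) mu g * hnorm h (pi g xi - xi) ^+ 2.

(* kappa(mu) in [0, +oo]: the smallest admissible constant (+oo if none). *)
Definition kappa (R : realType) (G : finGroupType) (mu : G -> R) : \bar R :=
  ereal_inf [set (k%:E) | k in [set k : R | 0 <= k /\ kappa_admissible mu k]].

(* This is the part of the structure of a tracial von Neumann
   algebra (M, tau) used in the statement. *)
Record tracial_star (R : realType) (M : algType R[i]) := TracialStar {
  star : M -> M;
  starD : forall x y : M, star (x + y) = star x + star y;
  starZ : forall (a : R[i]) (x : M), star (a *: x) = a^* *: star x;
  starM : forall x y : M, star (x * y) = star y * star x;
  starK : forall x : M, star (star x) = x;
  tau : M -> R[i];
  tau_linear : forall (a : R[i]) (x y : M), tau (a *: x + y) = a * tau x + tau y;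
  tau1 : tau 1 = 1;
  tauC : forall x y : M, tau (x * y) = tau (y * x);
  tau_pos : forall x : M, 0 <= tau (star x * x);
  tau_faithful : forall x : M, tau (star x * x) = 0 -> x = 0;
  tau_bounded : forall x : M, exists c : R, forall y : M,
      complex.Re (tau (star (x * y) * (x * y))) <= c * complex.Re (tau (star y * y))
}.

Definition norm2 (R : realType) (M : algType R[i]) (t : tracial_star M) (x : M) : R :=
  Num.sqrt (complex.Re (tau t (star t x * x))).

Definition commr (R : realType) (M : algType R[i]) (x y : M) : M := x * y - y * x.

Definition unitaryM (R : realType) (M : algType R[i]) (t : tracial_star M) (u : M) : Prop :=
  star t u * u = 1 /\ u * star t u = 1.

Definition unitary_hom (R : realType) (G : finGroupType) (M : algType R[i])
    (t : tracial_star M) (U : G -> M) : Prop :=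
  (forall g, unitaryM t (U g)) /\ (forall g1 g2, U (g1 * g2)%g = U g1 * U g2).

(* Main.v *)
Require Import Defs.
From HB Require Import structures.
From mathcomp Require Import all_boot all_order all_algebra all_fingroup.
From mathcomp Require Import complex.
From mathcomp Require Import boolp classical_sets reals constructive_ereal ereal.
From mathcomp Require Import topology normedtype sequences.
From mathcomp.algebra_tactics Require Import ring lra.
Import Order.TTheory GRing.Theory Num.Theory.
Import numFieldNormedType.Exports.
Set Implicit Arguments.
Unset Strict Implicit.
Unset Printing Implicit Defensive.
Local Open Scope ring_scope.



Lemma real_complete (R : realType) (u : nat -> R) :
  (forall e : R, 0 < e -> exists N : nat, forall m n : nat, (N <= m)%N -> (N <= n)%N -> `|u m - u n| < e) ->
  exists l : R, forall e : R, 0 < e -> exists N : nat, forall n : nat, (N <= n)%N -> `|u n - l| < e.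
Proof.
move=> Hc.
have : cvg (u @ \oo)%classic.
  apply: cauchy_cvg; apply: cauchy_exP => e e0.
  have [N HN] := Hc e e0.
  exists (u N); exists N => // n /= Nn.
  rewrite -ball_normE /ball_ /=. exact: HN.
move=> /cvg_ex [l /cvgrPdist_lt Hl]; exists l => e e0.
have [N _ HN] := Hl e e0.
exists N => n Nn; rewrite distrC; exact: HN.
Qed.



Lemma Re_conjC (R : realType) (z : R[i]) : complex.Re (z^*) = complex.Re z.
Proof. by case: z. Qed.

Lemma Re_realM (R : realType) (x : R) (z : R[i]) :
  complex.Re ((x%:C)%C * z) = x * complex.Re z.
Proof. case: z => a b /=. by rewrite mul0r subr0. Qed.

Lemma Re_ge0 (R : realType) (x : R[i]) : 0 <= x -> 0 <= complex.Re x.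
Proof. by rewrite lecE => /andP[]. Qed.

Lemma natC_inv (R : realType) (n : nat) : (n%:R^-1 : R[i]) = ((n%:R^-1 : R)%:C)%C.
Proof. by rewrite fmorphV rmorph_nat. Qed.

Lemma sum_constG (V : nmodType) (G : finType) (c : V) : \sum_(g : G) c = c *+ #|G|.
Proof. by rewrite sumr_const. Qed.

Lemma cjD (R : realType) (z w : R[i]) : (z + w)^* = z^* + w^*.
Proof. exact: rmorphD. Qed.
Lemma cjN (R : realType) (z : R[i]) : (- z)^* = - z^*.
Proof. exact: rmorphN. Qed.
Lemma cjB (R : realType) (z w : R[i]) : (z - w)^* = z^* - w^*.
Proof. exact: rmorphB. Qed.
Lemma cjM (R : realType) (z w : R[i]) : (z * w)^* = z^* * w^*.
Proof. exact: rmorphM. Qed.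
Lemma cjK (R : realType) (z : R[i]) : (z^*)^* = z.
Proof. exact: conjCK. Qed.
Lemma cj_sum (R : realType) (I : finType) (F : I -> R[i]) : (\sum_i F i)^* = \sum_i (F i)^*.
Proof. exact: rmorph_sum. Qed.
Lemma cj_real (R : realType) (x : R) : (x%:C)%C^* = (x%:C)%C :> R[i].
Proof. have -> : (x%:C)%C^* = (x +i* (-0))%C :> R[i] by []. by rewrite oppr0. Qed.


Lemma ip0l (R : realType) (H : lmodType R[i]) (h : hilbert H) z : ip h 0 z = 0.
Proof.
have := ip_linear h 1 0 0 z; rewrite scaler0 addr0 mul1r => E.
by apply: (addrI (ip h 0 z)); rewrite addr0 -E.
Qed.

Lemma ipDl (R : realType) (H : lmodType R[i]) (h : hilbert H) x y z :
  ip h (x + y) z = ip h x z + ip h y z.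
Proof. by have := ip_linear h 1 x y z; rewrite scale1r mul1r. Qed.

Lemma ipZl (R : realType) (H : lmodType R[i]) (h : hilbert H) a x z :
  ip h (a *: x) z = a * ip h x z.
Proof. by have := ip_linear h a x 0 z; rewrite addr0 ip0l addr0. Qed.

Lemma ipNl (R : realType) (H : lmodType R[i]) (h : hilbert H) x z :
  ip h (- x) z = - ip h x z.
Proof. by rewrite -scaleN1r ipZl mulN1r. Qed.

Lemma ipBl (R : realType) (H : lmodType R[i]) (h : hilbert H) x y z :
  ip h (x - y) z = ip h x z - ip h y z.
Proof. by rewrite ipDl ipNl. Qed.

Lemma ip_suml (R : realType) (H : lmodType R[i]) (h : hilbert H) (I : finType) (F : I -> H) z :
  ip h (\sum_i F i) z = \sum_i ip h (F i) z.
Proof.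
elim/big_rec2: _ => [|i a b _ <-]; first exact: ip0l.
exact: ipDl.
Qed.

Lemma ipDr (R : realType) (H : lmodType R[i]) (h : hilbert H) x y z :
  ip h x (y + z) = ip h x y + ip h x z.
Proof. by rewrite ip_conj ipDl cjD -!ip_conj. Qed.

Lemma ipNr (R : realType) (H : lmodType R[i]) (h : hilbert H) x z :
  ip h x (- z) = - ip h x z.
Proof. by rewrite ip_conj ipNl cjN -!ip_conj. Qed.

Lemma ipBr (R : realType) (H : lmodType R[i]) (h : hilbert H) x y z :
  ip h x (y - z) = ip h x y - ip h x z.
Proof. by rewrite ipDr ipNr. Qed.

Lemma hnorm2 (R : realType) (H : lmodType R[i]) (h : hilbert H) x :
  hnorm h x ^+ 2 = complex.Re (ip h x x).
Proof. by rewrite /hnorm sqr_sqrtr // Re_ge0 // ip_ge0. Qed.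

Lemma key_abstract (R : realType) (G : finGroupType) (mu : G -> R) (k : R) :
  kappa_admissible mu k ->
  forall (H : lmodType R[i]) (h : hilbert H) (pi : G -> H -> H), unitary_rep h pi ->
  forall xi : H,
  (#|G|%:R)^-1 * \sum_(g : G) hnorm h (pi g xi - xi) ^+ 2
    <= k * \sum_(g : G) mu g * hnorm h (pi g xi - xi) ^+ 2.
Proof.
move=> adm H h pi rep xi; have [plin pip psurj p1 pM] := rep.
have n0 : (0 < #|G|)%N by apply/card_gt0P; exists 1%g.
have nC0 : (#|G|%:R : R[i]) != 0 by rewrite pnatr_eq0 -lt0n.
have nR0 : (#|G|%:R : R) != 0 by rewrite pnatr_eq0 -lt0n.
have pi0 g : pi g 0 = 0.
  have := plin g 1 0 0; rewrite !scale1r addr0 => E.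
  by apply: (addrI (pi g 0)); rewrite addr0 -E.
have piZ g a v : pi g (a *: v) = a *: pi g v.
  by have := plin g a v 0; rewrite addr0 pi0 addr0.
have piD g u v : pi g (u + v) = pi g u + pi g v.
  by have := plin g 1 u v; rewrite !scale1r.
have pisum g (F : G -> H) : pi g (\sum_i F i) = \sum_i pi g (F i).
  elim/big_rec2: _ => [|i a b _ <-]; [exact: pi0| exact: piD].
set eta := ((#|G|%:R)^-1 : R[i]) *: \sum_(g : G) pi g xi.
have eta_inv g0 : pi g0 eta = eta.
  rewrite /eta piZ pisum; congr (_ *: _).
  under eq_bigr do rewrite -pM.
  by rewrite [RHS](reindex_inj (mulgI g0)).
have orth zeta : (forall g, pi g zeta = zeta) -> ip h (xi - eta) zeta = 0.
  move=> Hz; rewrite ipBl /eta ipZl ip_suml.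
  have E g : ip h (pi g xi) zeta = ip h xi zeta by rewrite -{1}(Hz g) pip.
  under eq_bigr do rewrite E.
  rewrite sum_constG; field; exact: nC0.
have eq1 : hnorm h (xi - eta) ^+ 2 = complex.Re (ip h xi xi)
     - (#|G|%:R)^-1 * \sum_(g : G) complex.Re (ip h (pi g xi) xi).
  rewrite hnorm2 ipBr (orth eta eta_inv) subr0 ipBl raddfB /=.
  by rewrite /eta ipZl ip_suml natC_inv Re_realM raddf_sum.
have eq2 g : hnorm h (pi g xi - xi) ^+ 2 =
    2 * complex.Re (ip h xi xi) - 2 * complex.Re (ip h (pi g xi) xi).
  rewrite hnorm2 !ipBl !ipBr pip (ip_conj h (pi g xi) xi) !raddfB /= Re_conjC.
  lra.
have sumE : \sum_(g : G) hnorm h (pi g xi - xi) ^+ 2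
    = #|G|%:R * (2 * hnorm h (xi - eta) ^+ 2).
  under eq_bigr do rewrite eq2.
  rewrite sumrB sumr_const -mulr_sumr eq1 -mulr_natr.
  by field.
have := adm H h pi rep xi eta eta_inv orth.
rewrite sumE (mulKf nR0).
set X := \sum_(g : G) _.
lra.
Qed.



Lemma tau0 (R : realType) (M : algType R[i]) (t : tracial_star M) : tau t 0 = 0.
Proof.
have := tau_linear t 1 0 0; rewrite scaler0 addr0 mul1r => E.
by apply: (addrI (tau t 0)); rewrite addr0 -E.
Qed.

Lemma tauD (R : realType) (M : algType R[i]) (t : tracial_star M) x y :
  tau t (x + y) = tau t x + tau t y.
Proof. by have := tau_linear t 1 x y; rewrite scale1r mul1r. Qed.

Lemma tauZ (R : realType) (M : algType R[i]) (t : tracial_star M) a x :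
  tau t (a *: x) = a * tau t x.
Proof. by have := tau_linear t a x 0; rewrite addr0 tau0 addr0. Qed.

Lemma tau_sum (R : realType) (M : algType R[i]) (t : tracial_star M) (I : finType) (F : I -> M) :
  tau t (\sum_i F i) = \sum_i tau t (F i).
Proof.
elim/big_rec2: _ => [|i a b _ <-]; first exact: tau0.
exact: tauD.
Qed.

Lemma star0 (R : realType) (M : algType R[i]) (t : tracial_star M) : star t 0 = 0.
Proof.
have := starD t 0 0; rewrite addr0 => E.
by apply: (addrI (star t 0)); rewrite addr0 -E.
Qed.

Lemma starN (R : realType) (M : algType R[i]) (t : tracial_star M) x :
  star t (- x) = - star t x.
Proof. by rewrite -scaleN1r starZ rmorphN1 scaleN1r. Qed.

Lemma starB (R : realType) (M : algType R[i]) (t : tracial_star M) x y :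
  star t (x - y) = star t x - star t y.
Proof. by rewrite starD starN. Qed.

Lemma star_sum (R : realType) (M : algType R[i]) (t : tracial_star M) (I : finType) (F : I -> M) :
  star t (\sum_i F i) = \sum_i star t (F i).
Proof.
elim/big_rec2: _ => [|i a b _ <-]; first exact: star0.
exact: starD.
Qed.

Lemma star1 (R : realType) (M : algType R[i]) (t : tracial_star M) : star t 1 = 1.
Proof.
have E : star t (star t 1) = star t 1.
  by rewrite -{1}[star t 1]mul1r starM starK mul1r.
by rewrite -E starK.
Qed.

Lemma tau_pos_Im (R : realType) (M : algType R[i]) (t : tracial_star M) x :
  complex.Im (tau t (star t x * x)) = 0.
Proof. exact/ger0_Im/tau_pos. Qed.

Lemma tau_conj (R : realType) (M : algType R[i]) (t : tracial_star M) x y :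
  tau t (star t y * x) = (tau t (star t x * y))^*.
Proof.
have E1 := tau_pos_Im t (x + y).
have E2 := tau_pos_Im t (x + 'i%C *: y).
have Ex := tau_pos_Im t x.
have Ey := tau_pos_Im t y.
move: E1 E2.
rewrite !starD !starZ !mulrDl !mulrDr -!scalerAl -!scalerAr !tauD !tauZ.
move: Ex Ey.
case: (tau t (star t x * x)) => a1 b1.
case: (tau t (star t y * y)) => a2 b2.
case: (tau t (star t x * y)) => a3 b3.
case: (tau t (star t y * x)) => a4 b4 /= -> ->.
move=> E1 E2.
apply/eqP; rewrite eq_complex /=; apply/andP; split; apply/eqP; lra.
Qed.



Lemma tau_unit_conj (R : realType) (M : algType R[i]) (t : tracial_star M) u a b :
  unitaryM t u ->
  tau t (star t (u * a * star t u) * (u * b * star t u)) = tau t (star t a * b).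
Proof.
move=> [Hsu Hus].
rewrite !starM starK -!mulrA (mulrA (star t u) u) Hsu mul1r.
by rewrite tauC -!mulrA Hsu mulr1.
Qed.

Lemma tau_unit_r (R : realType) (M : algType R[i]) (t : tracial_star M) u c :
  unitaryM t u ->
  tau t (star t (c * star t u) * (c * star t u)) = tau t (star t c * c).
Proof.
move=> [Hsu Hus].
rewrite starM starK -!mulrA tauC -!mulrA Hsu mulr1.
by [].
Qed.

Lemma hom1 (R : realType) (G : finGroupType) (M : algType R[i]) (t : tracial_star M) (W : G -> M) :
  unitary_hom t W -> W 1%g = 1.
Proof.
move=> [Hu HM]; have [Hs _] := Hu 1%g.
have E : W 1%g = W 1%g * W 1%g by rewrite -HM mulg1.
have : star t (W 1%g) * (W 1%g * W 1%g) = star t (W 1%g) * W 1%g by rewrite -E.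
by rewrite mulrA Hs mul1r.
Qed.

Definition piW (R : realType) (G : finGroupType) (M : algType R[i]) (t : tracial_star M)
  (W : G -> M) (x : M) (g : G) : M := W g * x * star t (W g).

Definition Tm (R : realType) (G : finGroupType) (M : algType R[i]) (t : tracial_star M)
  (W : G -> M) (x : M) (f : {ffun G -> R[i]}) : M := \sum_(g : G) f g *: piW t W x g.

Definition ipE (R : realType) (G : finGroupType) (M : algType R[i]) (t : tracial_star M)
  (W : G -> M) (x : M) (eps : R) (f1 f2 : {ffun G -> R[i]}) : R[i] :=
  (eps%:C)%C * (\sum_(g : G) f1 g * (f2 g)^*) + tau t (star t (Tm t W x f2) * Tm t W x f1).

Lemma TmL (R : realType) (G : finGroupType) (M : algType R[i]) (t : tracial_star M)
  (W : G -> M) (x : M) a f1 f2 :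
  Tm t W x (a *: f1 + f2) = a *: Tm t W x f1 + Tm t W x f2.
Proof.
rewrite /Tm scaler_sumr -big_split /=; apply: eq_bigr => g _.
by rewrite !ffunE scalerDl scalerA.
Qed.

Lemma TmB (R : realType) (G : finGroupType) (M : algType R[i]) (t : tracial_star M)
  (W : G -> M) (x : M) f1 f2 :
  Tm t W x (f1 - f2) = Tm t W x f1 - Tm t W x f2.
Proof.
rewrite /Tm -sumrB; apply: eq_bigr => g _.
by rewrite !ffunE scalerDl scaleNr.
Qed.

Lemma ipE_linear (R : realType) (G : finGroupType) (M : algType R[i]) (t : tracial_star M)
  (W : G -> M) (x : M) (eps : R) a f1 f2 f3 :
  ipE t W x eps (a *: f1 + f2) f3 = a * ipE t W x eps f1 f3 + ipE t W x eps f2 f3.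
Proof.
rewrite /ipE TmL mulrDr -scalerAr tauD tauZ.
have -> : \sum_(g : G) (a *: f1 + f2) g * (f3 g)^* =
   a * \sum_(g : G) f1 g * (f3 g)^* + \sum_(g : G) f2 g * (f3 g)^*.
  rewrite mulr_sumr -big_split /=; apply: eq_bigr => g _.
  by rewrite !ffunE mulrDl mulrA.
ring.
Qed.

Lemma ipE_conj (R : realType) (G : finGroupType) (M : algType R[i]) (t : tracial_star M)
  (W : G -> M) (x : M) (eps : R) f1 f2 :
  ipE t W x eps f2 f1 = (ipE t W x eps f1 f2)^*.
Proof.
rewrite /ipE cjD cjM cj_real cj_sum -tau_conj; congr (_ * _ + _).
by apply: eq_bigr => g _; rewrite cjM cjK mulrC.
Qed.

Lemma ipE_ge0 (R : realType) (G : finGroupType) (M : algType R[i]) (t : tracial_star M)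
  (W : G -> M) (x : M) (eps : R) (Heps : 0 < eps) f :
  0 <= ipE t W x eps f f.
Proof.
rewrite /ipE addr_ge0 ?tau_pos // mulr_ge0 //.
  by rewrite ler0c ltW.
by apply: sumr_ge0 => g _; apply: mul_conjC_ge0.
Qed.

Lemma ipE_eq0 (R : realType) (G : finGroupType) (M : algType R[i]) (t : tracial_star M)
  (W : G -> M) (x : M) (eps : R) (Heps : 0 < eps) f :
  ipE t W x eps f f = 0 -> f = 0.
Proof.
move=> /eqP; rewrite /ipE paddr_eq0 ?tau_pos //; last first.
  rewrite mulr_ge0 //; first by rewrite ler0c ltW.
  by apply: sumr_ge0 => g _; apply: mul_conjC_ge0.
case/andP; rewrite mulf_eq0 => /orP[|/eqP S0 _].
  by rewrite -(rmorph0 (real_complex R)) (inj_eq (@complexI _)) gt_eqF.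
apply/ffunP => g; rewrite ffunE; apply/eqP; rewrite -mul_conjC_eq0.
apply/eqP; exact: (psumr_eq0P (fun h _ => mul_conjC_ge0 (f h)) S0).
Qed.



Lemma cjE (R : realType) (a b : R) : (a +i* b)%C^* = (a +i* (- b))%C :> R[i].
Proof. by []. Qed.

Lemma ReI_sq (R : realType) (z : R[i]) :
  complex.Re (z * z^*) = complex.Re z ^+ 2 + complex.Im z ^+ 2.
Proof. case: z => a b; rewrite cjE /=; ring. Qed.

Lemma term_bound (R : realType) (z1 z2 c : R[i]) (d : R) :
  `|complex.Re z1| <= d -> `|complex.Im z1| <= d ->
  `|complex.Re z2| <= d -> `|complex.Im z2| <= d ->
  complex.Re (z1^* * z2 * c) <= 2 * d ^+ 2 * (`|complex.Re c| + `|complex.Im c|).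
Proof.
case: z1 => p q; case: z2 => r s; case: c => cr ci; rewrite cjE /=.
move=> hp hq hr hs.
have pb : forall a b : R, `|a| <= d -> `|b| <= d -> `|a * b| <= d ^+ 2.
  move=> a b ha hb; rewrite normrM expr2; apply: ler_pM => //.
have hA : `|p * r + q * s| <= 2 * d ^+ 2.
  apply: (le_trans (ler_normD _ _)); have := pb _ _ hp hr; have := pb _ _ hq hs; lra.
have hB : `|p * s - q * r| <= 2 * d ^+ 2.
  apply: (le_trans (ler_normB _ _)); have := pb _ _ hp hs; have := pb _ _ hq hr; lra.
have h1 : (p * r + q * s) * cr <= 2 * d ^+ 2 * `|cr|.
  apply: (le_trans (ler_norm _)); rewrite normrM; apply: ler_wpM2r => //.
have h2 : - ((p * s - q * r) * ci) <= 2 * d ^+ 2 * `|ci|.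
  apply: (le_trans (ler_norm _)); rewrite normrN normrM; apply: ler_wpM2r => //.
have -> : (p * r - - q * s) * cr - (p * s + - q * r) * ci
   = (p * r + q * s) * cr - ((p * s - q * r) * ci) by ring.
lra.
Qed.

Lemma coord_bound (R : realType) (G : finGroupType) (M : algType R[i]) (t : tracial_star M)
  (W : G -> M) (x : M) (eps : R) (Heps : 0 < eps) (d : {ffun G -> R[i]}) (g : G) :
  eps * (complex.Re (d g) ^+ 2 + complex.Im (d g) ^+ 2)
    <= complex.Re (ipE t W x eps d d).
Proof.
rewrite /ipE raddfD /= Re_realM raddf_sum.
have T0 := Re_ge0 (tau_pos t (Tm t W x d)).
have S1 : complex.Re (d g * (d g)^*) <= \sum_(h : G) complex.Re (d h * (d h)^*).
  rewrite (bigD1 g) //= lerDl; apply: sumr_ge0 => h _.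
  by rewrite ReI_sq addr_ge0 // sqr_ge0.
rewrite ReI_sq in S1.
set S := \sum_(h : G) _ in S1 *.
set T := complex.Re _ in T0 *.
nra.
Qed.

Lemma tauZZ (R : realType) (M : algType R[i]) (t : tracial_star M) a b (A B : M) :
  tau t ((a *: A) * (b *: B)) = a * b * tau t (A * B).
Proof. by rewrite -scalerAl -scalerAr scalerA tauZ. Qed.

Definition cgh (R : realType) (G : finGroupType) (M : algType R[i]) (t : tracial_star M)
  (W : G -> M) (x : M) (g h : G) : R[i] :=
  tau t (star t (piW t W x g) * piW t W x h).

Lemma Tm_expand (R : realType) (G : finGroupType) (M : algType R[i]) (t : tracial_star M)
  (W : G -> M) (x : M) (f : {ffun G -> R[i]}) :
  tau t (star t (Tm t W x f) * Tm t W x f)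
   = \sum_(g : G) \sum_(h : G) ((f g)^* * f h) * cgh t W x g h.
Proof.
rewrite /Tm star_sum mulr_suml tau_sum; apply: eq_bigr => g _.
rewrite mulr_sumr tau_sum; apply: eq_bigr => h _.
by rewrite starZ tauZZ.
Qed.

Definition Kc (R : realType) (G : finGroupType) (M : algType R[i]) (t : tracial_star M)
  (W : G -> M) (x : M) (eps : R) : R :=
  2 * eps * #|G|%:R + 2 * \sum_(g : G) \sum_(h : G)
     (`|complex.Re (cgh t W x g h)| + `|complex.Im (cgh t W x g h)|).

Lemma Kc_ge0 (R : realType) (G : finGroupType) (M : algType R[i]) (t : tracial_star M)
  (W : G -> M) (x : M) (eps : R) : 0 < eps -> 0 <= Kc t W x eps.
Proof.
move=> e0; rewrite /Kc; apply: addr_ge0.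
  by rewrite !mulr_ge0 // ltW.
apply: mulr_ge0 => //.
by apply: sumr_ge0 => g _; apply: sumr_ge0 => h _; rewrite addr_ge0.
Qed.

Lemma sq_le (R : realType) (a d : R) : `|a| <= d -> a ^+ 2 <= d ^+ 2.
Proof. rewrite ler_norml => /andP[h1 h2]; nra. Qed.

Lemma upper_bound (R : realType) (G : finGroupType) (M : algType R[i]) (t : tracial_star M)
  (W : G -> M) (x : M) (eps : R) (Heps : 0 < eps) (d : {ffun G -> R[i]}) (del : R) :
  (forall g, `|complex.Re (d g)| <= del /\ `|complex.Im (d g)| <= del) ->
  complex.Re (ipE t W x eps d d) <= del ^+ 2 * Kc t W x eps.
Proof.
move=> Hd.
rewrite /ipE raddfD /= Re_realM raddf_sum Tm_expand raddf_sum.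
have S1 : \sum_(g : G) complex.Re (d g * (d g)^*) <= 2 * del ^+ 2 * #|G|%:R.
  rewrite mulr_natr -sum_constG; apply: ler_sum => g _.
  rewrite ReI_sq; have [h1 h2] := Hd g; have := sq_le h1; have := sq_le h2; lra.
have S2 : \sum_(g : G) complex.Re (\sum_(h : G) (d g)^* * d h * cgh t W x g h)
   <= 2 * del ^+ 2 * \sum_(g : G) \sum_(h : G)
     (`|complex.Re (cgh t W x g h)| + `|complex.Im (cgh t W x g h)|).
  rewrite mulr_sumr; apply: ler_sum => g _.
  rewrite raddf_sum mulr_sumr; apply: ler_sum => h _.
  have [h1 h2] := Hd g; have [h3 h4] := Hd h.
  exact: term_bound.
have S3 := ler_wpM2l (ltW Heps) S1.
rewrite /Kc.
set A := \sum_(g : G) complex.Re (d g * (d g)^*) in S1 S3 *.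
set B := \sum_(g : G) complex.Re _ in S2 *.
set C := \sum_(g : G) \sum_(h : G) _ in S2 *.
lra.
Qed.

Lemma sqrt_lt_sq (R : realType) (a b : R) : 0 <= a -> Num.sqrt a < b -> a < b ^+ 2.
Proof. move=> a0 H; rewrite -(sqr_sqrtr a0); have := sqrtr_ge0 a; nra. Qed.

Lemma lt_sqrt_sq (R : realType) (a b : R) : 0 < b -> a < b ^+ 2 -> Num.sqrt a < b.
Proof.
move=> b0 H; rewrite -[X in _ < X](gtr0_norm b0) -sqrtr_sqr ltr_sqrt //.
by rewrite exprn_gt0.
Qed.

Lemma sq_lt_norm (R : realType) (a e : R) : 0 < e -> a ^+ 2 < e ^+ 2 -> `|a| < e.
Proof. move=> e0 H; rewrite ltr_norml; apply/andP; split; nra. Qed.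

Lemma fin_ineq (R : realType) (del K e : R) :
  0 < del -> 0 <= K -> del * (K + 1) = e -> del ^+ 2 * K < e ^+ 2.
Proof.
move=> del0 K0 <-; rewrite exprMn.
have d2 : 0 < del ^+ 2 by rewrite exprn_gt0.
rewrite ltr_pM2l // sqrrD1; have := sqr_ge0 K; lra.
Qed.

Lemma ipE_complete (R : realType) (G : finGroupType) (M : algType R[i]) (t : tracial_star M)
  (W : G -> M) (x : M) (eps : R) (Heps : 0 < eps) (u : nat -> {ffun G -> R[i]}) :
  (forall e : R, 0 < e -> exists N : nat, forall m n : nat, (N <= m)%N -> (N <= n)%N ->
        Num.sqrt (complex.Re (ipE t W x eps (u m - u n) (u m - u n))) < e) ->
  exists l : {ffun G -> R[i]}, forall e : R, 0 < e -> exists N : nat, forall n : nat, (N <= n)%N ->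
        Num.sqrt (complex.Re (ipE t W x eps (u n - l) (u n - l))) < e.
Proof.
move=> Hc.
have coordC : forall g : G,
  (forall e : R, 0 < e -> exists N : nat, forall m n : nat, (N <= m)%N -> (N <= n)%N ->
     `|complex.Re (u m g) - complex.Re (u n g)| < e) /\
  (forall e : R, 0 < e -> exists N : nat, forall m n : nat, (N <= m)%N -> (N <= n)%N ->
     `|complex.Im (u m g) - complex.Im (u n g)| < e).
  move=> g; split => e e0.
  - have se : 0 < e * Num.sqrt eps by rewrite mulr_gt0 // sqrtr_gt0.
    have [N HN] := Hc _ se; exists N => m n Hm Hn.
    have H2 := sqrt_lt_sq (Re_ge0 (ipE_ge0 t W x Heps (u m - u n))) (HN m n Hm Hn).
    have H3 := coord_bound t W x Heps (u m - u n) g.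
    rewrite !ffunE !raddfB /= in H3.
    rewrite exprMn sqr_sqrtr ?ltW // in H2.
    apply: sq_lt_norm => //.
    set a := complex.Re (u m g) - complex.Re (u n g) in H3 *.
    set b := complex.Im (u m g) - complex.Im (u n g) in H3.
    have := sqr_ge0 b; nra.
  - have se : 0 < e * Num.sqrt eps by rewrite mulr_gt0 // sqrtr_gt0.
    have [N HN] := Hc _ se; exists N => m n Hm Hn.
    have H2 := sqrt_lt_sq (Re_ge0 (ipE_ge0 t W x Heps (u m - u n))) (HN m n Hm Hn).
    have H3 := coord_bound t W x Heps (u m - u n) g.
    rewrite !ffunE !raddfB /= in H3.
    rewrite exprMn sqr_sqrtr ?ltW // in H2.
    apply: sq_lt_norm => //.
    set a := complex.Re (u m g) - complex.Re (u n g) in H3.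
    set b := complex.Im (u m g) - complex.Im (u n g) in H3 *.
    have := sqr_ge0 a; nra.
have lims : forall g : G, exists p : R * R,
  (forall e : R, 0 < e -> exists N : nat, forall n : nat, (N <= n)%N -> `|complex.Re (u n g) - p.1| < e) /\
  (forall e : R, 0 < e -> exists N : nat, forall n : nat, (N <= n)%N -> `|complex.Im (u n g) - p.2| < e).
  move=> g; have [c1 c2] := coordC g.
  have [l1 Hl1] := @real_complete _ _ c1; have [l2 Hl2] := @real_complete _ _ c2.
  by exists (l1, l2); split.
have [lf Hlf] := choice lims.
exists [ffun g => ((lf g).1 +i* (lf g).2)%C] => e e0.
have K0 := Kc_ge0 t W x Heps.
set K := Kc t W x eps in K0 *.
set del := e / (K + 1).
have K1 : 0 < K + 1 by lra.
have del0 : 0 < del by rewrite divr_gt0.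
have delK : del * (K + 1) = e by rewrite /del divfK // gt_eqF.
have Ng : forall g : G, exists N : nat, forall n : nat, (N <= n)%N ->
    `|complex.Re (u n g) - (lf g).1| < del /\ `|complex.Im (u n g) - (lf g).2| < del.
  move=> g; have [h1 h2] := Hlf g.
  have [N1 HN1] := h1 _ del0; have [N2 HN2] := h2 _ del0.
  exists (maxn N1 N2) => n Hn; split.
    by apply: HN1; apply: leq_trans Hn; apply: leq_maxl.
  by apply: HN2; apply: leq_trans Hn; apply: leq_maxr.
have [Nf HNf] := choice Ng.
exists (\max_(g : G) Nf g) => n Hn.
apply: lt_sqrt_sq => //.
apply: (le_lt_trans (upper_bound t W x Heps (del := del) _)).
  move=> g; rewrite !ffunE !raddfB /=.
  have [h1 h2] := HNf g n (leq_trans (leq_bigmax g) Hn).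
  by split; apply: ltW.
exact: fin_ineq.
Qed.



Definition hE (R : realType) (G : finGroupType) (M : algType R[i]) (t : tracial_star M)
  (W : G -> M) (x : M) (eps : R) (Heps : 0 < eps) : hilbert {ffun G -> R[i]} :=
  @Hilbert R {ffun G -> R[i]} (ipE t W x eps)
    (@ipE_linear R G M t W x eps)
    (@ipE_conj R G M t W x eps)
    (@ipE_ge0 R G M t W x eps Heps)
    (@ipE_eq0 R G M t W x eps Heps)
    (@ipE_complete R G M t W x eps Heps).

Definition lam (R : realType) (G : finGroupType) (k : G) (f : {ffun G -> R[i]}) : {ffun G -> R[i]} :=
  [ffun g => f (k^-1 * g)%g].

Lemma mulZmid (R : realType) (M : algType R[i]) (a : R[i]) (A B C : M) :
  A * (a *: B) * C = a *: (A * B * C).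
Proof. by rewrite -scalerAr -scalerAl. Qed.

Lemma Tm_lam (R : realType) (G : finGroupType) (M : algType R[i]) (t : tracial_star M)
  (W : G -> M) (x : M) (k : G) (f : {ffun G -> R[i]}) :
  unitary_hom t W -> Tm t W x (lam k f) = W k * Tm t W x f * star t (W k).
Proof.
move=> [Hu HM].
rewrite /Tm (reindex_inj (mulgI k)) /= mulr_sumr mulr_suml; apply: eq_bigr => g _.
have P : piW t W x (k * g) = W k * piW t W x g * star t (W k).
  by rewrite /piW HM starM !mulrA.
by rewrite ffunE mulKg P mulZmid.
Qed.

Lemma lam_rep (R : realType) (G : finGroupType) (M : algType R[i]) (t : tracial_star M)
  (W : G -> M) (x : M) (eps : R) (Heps : 0 < eps) :
  unitary_hom t W -> unitary_rep (hE t W x Heps) (@lam R G).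
Proof.
move=> HW; split.
- by move=> g a f1 f2; apply/ffunP => z; rewrite !ffunE.
- move=> g f1 f2; rewrite /= /ipE !Tm_lam // tau_unit_conj; last by case: HW => Hu _; exact: Hu.
  congr (_ * _ + _).
  rewrite [LHS](reindex_inj (mulgI g)); apply: eq_bigr => z _.
  by rewrite !ffunE mulKg.
- move=> g y; exists (lam g^-1 y); apply/ffunP => z.
  by rewrite !ffunE invgK mulKVg.
- by move=> f; apply/ffunP => z; rewrite !ffunE invg1 mul1g.
- by move=> g1 g2 f; apply/ffunP => z; rewrite !ffunE invMg mulgA.
Qed.

Definition xi0 (R : realType) (G : finGroupType) : {ffun G -> R[i]} :=
  [ffun g => ((g == 1%g)%:R : R[i])].

Lemma Tm_xi (R : realType) (G : finGroupType) (M : algType R[i]) (t : tracial_star M)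
  (W : G -> M) (x : M) :
  unitary_hom t W -> Tm t W x (xi0 R G) = x.
Proof.
move=> HW; rewrite /Tm (bigD1 1%g) //= big1 ?addr0.
  by rewrite ffunE eqxx scale1r /piW (hom1 HW) star1 mulr1 mul1r.
by move=> g /negbTE Hg; rewrite ffunE Hg scale0r.
Qed.

Definition cst (R : realType) (G : finGroupType) (g : G) : R :=
  complex.Re (\sum_(z : G) (lam g (xi0 R G) - xi0 R G) z * ((lam g (xi0 R G) - xi0 R G) z)^*).

Lemma cst_ge0 (R : realType) (G : finGroupType) (g : G) : 0 <= cst R g.
Proof.
rewrite /cst raddf_sum; apply: sumr_ge0 => z _.
by rewrite /= ReI_sq addr_ge0 // sqr_ge0.
Qed.

Lemma hnorm_lam (R : realType) (G : finGroupType) (M : algType R[i]) (t : tracial_star M)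
  (W : G -> M) (x : M) (eps : R) (Heps : 0 < eps) (g : G) :
  unitary_hom t W ->
  hnorm (hE t W x Heps) (lam g (xi0 R G) - xi0 R G) ^+ 2
   = eps * cst R g + norm2 t (commr (W g) x) ^+ 2.
Proof.
move=> HW; rewrite hnorm2 /= /ipE raddfD /= Re_realM TmB Tm_lam // Tm_xi //.
have [Hs Hus] := (proj1 HW) g.
have -> : W g * x * star t (W g) - x = commr (W g) x * star t (W g).
  by rewrite /commr mulrBl -(mulrA x) Hus mulr1.
rewrite tau_unit_r; last exact: (proj1 HW) g.
by rewrite /norm2 sqr_sqrtr // Re_ge0 // tau_pos.
Qed.

Lemma small_mul (R : realType) (C e : R) : 0 <= C -> 0 < e -> e / (C + 1) * C <= e.
Proof.
move=> C0 e0; have C1 : 0 < C + 1 by lra.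
rewrite mulrAC ler_pdivrMr // ler_pM2l //; lra.
Qed.

Lemma group_adm (R : realType) (G : finGroupType) (M : algType R[i]) (t : tracial_star M)
  (mu : G -> R) (W : G -> M) (x : M) (k : R) :
  prob_measure mu -> unitary_hom t W -> 0 <= k -> kappa_admissible mu k ->
  (#|G|%:R)^-1 * \sum_(g : G) norm2 t (commr (W g) x) ^+ 2
    <= k * \sum_(g : G) mu g * norm2 t (commr (W g) x) ^+ 2.
Proof.
move=> [mu0 mu1] HW k0 adm.
set D := fun g => norm2 t (commr (W g) x) ^+ 2.
have n0 : 0 <= (#|G|%:R : R)^-1 by rewrite invr_ge0 ler0n.
have Sc0 : 0 <= \sum_(g : G) cst R g by apply: sumr_ge0 => g _; exact: cst_ge0.
have Smc0 : 0 <= \sum_(g : G) mu g * cst R g.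
  by apply: sumr_ge0 => g _; rewrite mulr_ge0 // cst_ge0.
have main eps (Heps : 0 < eps) :
   (#|G|%:R)^-1 * (eps * \sum_(g : G) cst R g + \sum_(g : G) D g)
   <= k * (eps * \sum_(g : G) mu g * cst R g + \sum_(g : G) mu g * D g).
  have := key_abstract adm (lam_rep x Heps HW) (xi0 R G).
  under eq_bigr do rewrite hnorm_lam //.
  under [X in _ <= _ * X -> _]eq_bigr do rewrite hnorm_lam //.
  rewrite big_split /= -mulr_sumr.
  under [X in _ <= _ * X -> _]eq_bigr do rewrite mulrDr mulrCA.
  by rewrite big_split /= -mulr_sumr.
apply/ler_addgt0Pr => e e0.
set C := k * \sum_(g : G) mu g * cst R g.
have C0 : 0 <= C by rewrite mulr_ge0.
have eps0 : 0 < e / (C + 1) by rewrite divr_gt0 //; lra.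
have := main _ eps0.
have := small_mul C0 e0.
rewrite /C.
set eps := e / _.
have f1 : 0 <= (#|G|%:R : R)^-1 * (eps * \sum_(g : G) cst R g).
  by rewrite mulr_ge0 // mulr_ge0 // ltW.
move: f1.
set a := (#|G|%:R : R)^-1.
set b := \sum_(g : G) cst R g.
set c := \sum_(g : G) mu g * cst R g.
set d1 := \sum_(g : G) D g.
set d2 := \sum_(g : G) mu g * D g.
move=> f1 f2 f3.
have -> : a * d1 = a * (eps * b + d1) - a * (eps * b) by ring.
have -> : k * d2 + e = k * (eps * c + d2) + (e - eps * (k * c)) by ring.
lra.
Qed.

Lemma kappa_approx (R : realType) (G : finGroupType) (mu : G -> R) (k : R) :
  kappa mu = k%:E -> 0 <= k /\
  (forall e : R, 0 < e -> exists k' : R, [/\ 0 <= k', kappa_admissible mu k' & k' < k + e]).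
Proof.
rewrite /kappa => Hk; split.
  have : (0%:E <= ereal_inf [set k%:E | k in [set k : R | (0 <= k)%R /\ kappa_admissible mu k]])%E.
    by apply: le_ereal_inf_tmp => y [k' [k0 _] <-]; rewrite lee_fin.
  by rewrite Hk lee_fin.
move=> e e0.
have : (ereal_inf [set k%:E | k in [set k : R | (0 <= k)%R /\ kappa_admissible mu k]] < (k + e)%:E)%E.
  by rewrite Hk lte_fin; lra.
move/ereal_inf_lt => [y [k' [k0 adm] <-]]; rewrite lte_fin => lt.
by exists k'.
Qed.

Lemma group_kappa (R : realType) (G : finGroupType) (M : algType R[i]) (t : tracial_star M)
  (mu : G -> R) (W : G -> M) (x : M) (k : R) :
  prob_measure mu -> unitary_hom t W -> kappa mu = k%:E ->
  (#|G|%:R)^-1 * \sum_(g : G) norm2 t (commr (W g) x) ^+ 2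
    <= k * \sum_(g : G) mu g * norm2 t (commr (W g) x) ^+ 2.
Proof.
move=> pm HW Hk; have [k0 ap] := kappa_approx Hk.
have [mu0 _] := pm.
set S := \sum_(g : G) mu g * _.
have S0 : 0 <= S by apply: sumr_ge0 => g _; rewrite mulr_ge0 // sqr_ge0.
apply/ler_addgt0Pr => e e0.
have e1 : 0 < e / (S + 1) by rewrite divr_gt0 //; lra.
have [k' [k'0 adm lt]] := ap _ e1.
apply: (le_trans (group_adm x pm HW k'0 adm)).
have := small_mul S0 e0.
have : k' * S <= (k + e / (S + 1)) * S by rewrite ler_wpM2r // ltW.
set q := e / (S + 1).
move=> h1 h2; rewrite mulrDl in h1; rewrite -/S; lra.
Qed.

Lemma norm2_commrC (R : realType) (M : algType R[i]) (t : tracial_star M) (a b : M) :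
  norm2 t (commr a b) = norm2 t (commr b a).
Proof.
have -> : commr a b = - commr b a by rewrite /commr opprB.
by rewrite /norm2 starN mulNr mulrN opprK.
Qed.

Theorem theorem2p1 (R : realType) (A B : finGroupType) (mu : A -> R) (nu : B -> R)
  (M : algType R[i]) (t : tracial_star M) (U : A -> M) (V : B -> M) :
  prob_measure mu -> prob_measure nu ->
  unitary_hom t U -> unitary_hom t V ->
  forall k1 k2 : R, kappa mu = k1%:E -> kappa nu = k2%:E ->
    (#|A|%:R * #|B|%:R)^-1 *
      (\sum_(a : A) \sum_(b : B) norm2 t (commr (U a) (V b)) ^+ 2)
    <= k1 * k2 *
      (\sum_(a : A) \sum_(b : B) mu a * nu b * norm2 t (commr (U a) (V b)) ^+ 2).
Proof.
move=> pmu pnu HU HV k1 k2 K1 K2.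
have [k10 _] := kappa_approx K1.
have [mu0 _] := pmu.
set F := fun a b => norm2 t (commr (U a) (V b)) ^+ 2.
have St1 a : (#|B|%:R)^-1 * \sum_(b : B) F a b <= k2 * \sum_(b : B) nu b * F a b.
  have := group_kappa (U a) pnu HV K2.
  by rewrite /F; under eq_bigr do rewrite norm2_commrC; under [X in _ <= _ * X -> _]eq_bigr do rewrite norm2_commrC.
have St2 b : (#|A|%:R)^-1 * \sum_(a : A) F a b <= k1 * \sum_(a : A) mu a * F a b.
  by have := group_kappa (V b) pmu HU K1.
have nA : 0 <= (#|A|%:R : R)^-1 by rewrite invr_ge0 ler0n.
have nB : 0 <= (#|B|%:R : R)^-1 by rewrite invr_ge0 ler0n.
rewrite -/(F _ _).
have E1 : (#|A|%:R * #|B|%:R)^-1 * (\sum_(a : A) \sum_(b : B) F a b)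
   = (#|B|%:R)^-1 * \sum_(b : B) ((#|A|%:R)^-1 * \sum_(a : A) F a b).
  rewrite invfM (mulrC (#|A|%:R^-1)) -mulrA exchange_big /= -mulr_sumr.
  by congr (_ * (_ * _)).
rewrite E1.
apply: (le_trans (ler_wpM2l nB (ler_sum _ (fun b _ => St2 b)))).
have E2 : (#|B|%:R)^-1 * \sum_(b : B) (k1 * \sum_(a : A) mu a * F a b)
    = k1 * \sum_(a : A) mu a * ((#|B|%:R)^-1 * \sum_(b : B) F a b).
  transitivity (\sum_(a : A) \sum_(b : B) (#|B|%:R)^-1 * k1 * mu a * F a b).
    rewrite mulr_sumr.
    under eq_bigr => b _ do rewrite mulrA mulr_sumr.
    rewrite exchange_big /=; apply: eq_bigr => a _; apply: eq_bigr => b _; ring.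
  rewrite mulr_sumr; apply: eq_bigr => a _.
  rewrite !mulrA mulr_sumr; apply: eq_bigr => b _; ring.
rewrite E2.
apply: (le_trans (ler_wpM2l k10 (ler_sum _ (fun a _ => ler_wpM2l (mu0 a) (St1 a))))).
rewrite le_eqVlt; apply/orP; left; apply/eqP.
rewrite -mulrA; congr (k1 * _); rewrite [RHS]mulr_sumr; apply: eq_bigr => a _.
rewrite mulrCA; congr (k2 * _); rewrite mulr_sumr; apply: eq_bigr => b _.
by rewrite mulrA.
Qed.
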